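(* For every binary matrix $P$ such that $Q_1\preccurlyeq P$, where $Q_1\in\{0,1\}^{3\times 3}$ has $\mathrm{supp}(Q_1)=\{(1,2),(2,1),(3,3)\}$, the class $\mathrm{Av}(P)$ is row-unbounded.
   Context: All matrices are binary; rows are numbered top to bottom, columns left to right; $(i,j)$ is the entry in row $i$, column $j$, a 1-entry if it equals 1; $\mathrm{supp}$ is the set of 1-entries. For integers, $(a,b]=\{a+1,\dots,b\}$. A pattern $P\in\{0,1\}^{k\times\ell}$ is an interval minor of $M\in\{0,1\}^{m\times n}$, written $P\preccurlyeq M$, if there are integers $0=r_0<\dots<r_k=m$ and $0=c_0<\dots<c_\ell=n$ such that for each 1-entry $(i,j)$ of $P$ the submatrix of $M$ on rows $(r_{i-1},r_i]$ and columns $(c_{j-1},c_j]$ contains a 1-entry; otherwise $M$ avoids $P$. $\mathrm{Av}(P)$ is the set of binary matrices avoiding $P$. A matrix $M\in\mathcal C$ is critical for $\mathcal C$ if changing any single 0-entry of $M$ into a 1-entry gives a matrix outside $\mathcal C$. A horizontal 0-run is a maximal set of consecutive 0-entries within a single row; the complexity of a row is the number of horizontal 0-runs in it. The row-complexity of $\mathcal C$ is the supremum over matrices critical for $\mathcal C$ of the maximum complexity of a row; $\mathcal C$ is row-unbounded if this supremum is infinite. *)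

(* Defs.v *)
(* Binary matrices are 'M[bool]_(m, n); rows/columns are
   0-indexed here (row i of the paper is ordinal i-1). *)
From mathcomp Require Import all_boot all_order all_algebra.
Set Implicit Arguments. Unset Strict Implicit. Unset Printing Implicit Defensive.

(* P (k x l) is an interval minor of M (m x n): there are integers
   0 = r_0 < ... < r_k = m and 0 = c_0 < ... < c_l = n such that for each
   1-entry (i,j) of P (0-indexed), the block of M on rows (r_i, r_{i+1}] and
   columns (c_j, c_{j+1}] (1-indexed), i.e. 0-indexed rows a with
   r_i <= a < r_{i+1} and columns b with c_j <= b < c_{j+1}, contains a 1. *)
Definition interval_minor (k l m n : nat) (P : 'M[bool]_(k, l))
    (M : 'M[bool]_(m, n)) : Prop :=
  exists (r c : nat -> nat),
    [/\ r 0 = 0, r k = m & (forall t, t < k -> r t < r t.+1)] /\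
    [/\ c 0 = 0, c l = n & (forall t, t < l -> c t < c t.+1)] /\
        (forall (i : 'I_k) (j : 'I_l), P i j ->
          exists (a : 'I_m) (b : 'I_n),
            [/\ M a b, r i <= a < r i.+1 & c j <= b < c j.+1]).

Definition mclass := forall m n : nat, 'M[bool]_(m, n) -> Prop.

Definition Av (k l : nat) (P : 'M[bool]_(k, l)) : mclass :=
  fun m n M => ~ interval_minor P M.

Definition set1 (m n : nat) (M : 'M[bool]_(m, n)) (a : 'I_m) (b : 'I_n)
  : 'M[bool]_(m, n) :=
  \matrix_(x, y) (M x y || ((x == a) && (y == b))).

Definition critical (C : mclass) (m n : nat) (M : 'M[bool]_(m, n)) : Prop :=
  C m n M /\ forall (a : 'I_m) (b : 'I_n), M a b = false -> ~ C m n (set1 M a b).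

(* Entry (i, j) is the first entry of a horizontal 0-run: it is 0 and either
   j is the first column or entry (i, j-1) is 1. *)
Definition run_start (m n : nat) (M : 'M[bool]_(m, n)) (i : 'I_m) (j : 'I_n)
  : bool :=
  ~~ M i j && ((val j == 0) || [exists j' : 'I_n, (j'.+1 == val j) && M i j']).

Definition row_complexity (m n : nat) (M : 'M[bool]_(m, n)) (i : 'I_m) : nat :=
  #|[pred j : 'I_n | run_start M i j]|.

(* The supremum over critical matrices of the maximum row complexity is
   infinite. *)
Definition row_unbounded (C : mclass) : Prop :=
  forall K : nat, exists (m n : nat) (M : 'M[bool]_(m, n)) (i : 'I_m),
    critical C M /\ K <= row_complexity M i.

Definition Q1 : 'M[bool]_(3, 3) :=
  \matrix_(i, j) [|| (val i == 0) && (val j == 1),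
                     (val i == 1) && (val j == 0) |
                     (val i == 2) && (val j == 2)].

(* Main.v *)
Require Import Defs.
From mathcomp Require Import all_boot all_order all_algebra.
From mathcomp Require Import zify.
From Stdlib Require Import Classical.

Set Implicit Arguments. Unset Strict Implicit. Unset Printing Implicit Defensive.

Definition ent (m n : nat) (M : 'M[bool]_(m, n)) (a b : nat) : bool :=
  match (insub a : option 'I_m), (insub b : option 'I_n) with
  | Some a', Some b' => M a' b'
  | _, _ => false
  end.

Lemma entE m n (M : 'M[bool]_(m, n)) (a : 'I_m) (b : 'I_n) : ent M a b = M a b.
Proof. by rewrite /ent !valK. Qed.

Lemma ent_lt m n (M : 'M[bool]_(m, n)) a b : ent M a b -> (a < m) /\ (b < n).
Proof.
rewrite /ent; case: insubP => [a' Ha _|//]; case: insubP => [b' Hb _|//] _; by [].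
Qed.

Lemma ent_ord m n (M : 'M[bool]_(m, n)) a b : ent M a b ->
  exists (a' : 'I_m) (b' : 'I_n), [/\ val a' = a, val b' = b & M a' b'].
Proof.
move=> H; case: (ent_lt H) => Ha Hb.
exists (Ordinal Ha), (Ordinal Hb); split => //.
by rewrite -entE.
Qed.

Lemma cut_mono (k : nat) (r : nat -> nat) :
  (forall t, t < k -> r t < r t.+1) -> forall i j, i <= j <= k -> r i <= r j.
Proof.
move=> Hr i j /andP[Hij Hjk].
elim: j Hij Hjk => [|j IH] Hij Hjk.
  by move: Hij; rewrite leqn0 => /eqP ->.
case: (ltngtP i j.+1) Hij => // [Hlt|->] _ ; last by [].
apply: leq_trans (IH Hlt (ltnW Hjk)) _.
exact: ltnW (Hr j Hjk).
Qed.

Lemma cut_ge (k : nat) (r : nat -> nat) :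
  r 0 = 0 -> (forall t, t < k -> r t < r t.+1) -> forall i, i <= k -> i <= r i.
Proof.
move=> H0 Hr; elim => [|i IH] Hi //.
have := Hr i Hi; have := IH (ltnW Hi); lia.
Qed.

Section Main.
Variables (k l : nat) (P : 'M[bool]_(k, l)).

Definition cand213 (i j : nat) : Prop :=
  exists a2 b2 a3 b3, [/\ ent P i j, ent P a2 b2, ent P a3 b3,
                          i < a2 < a3 & b2 < j < b3].

Definition candb (i j : nat) : bool :=
  ent P i j && [exists a2 : 'I_k, exists b2 : 'I_l, exists a3 : 'I_k, exists b3 : 'I_l,
    [&& i < a2, a2 < a3, b2 < j, j < b3, P a2 b2 & P a3 b3]].

Lemma candbP i j : candb i j <-> cand213 i j.
Proof.
split.
  case/andP=> He /existsP[a2 /existsP[b2 /existsP[a3 /existsP[b3 /and5P[? ? ? ? /andP[H2 H3]]]]]].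
  exists a2, b2, a3, b3; split => //; rewrite ?entE //; apply/andP; split => //.
case=> a2 [b2 [a3 [b3 [He H2 H3 /andP[Ha Ha'] /andP[Hb Hb']]]]].
case: (ent_ord H2) => a2' [b2' [Ea2 Eb2 P2]].
case: (ent_ord H3) => a3' [b3' [Ea3 Eb3 P3]].
rewrite /candb He /=; apply/existsP; exists a2'; apply/existsP; exists b2'.
apply/existsP; exists a3'; apply/existsP; exists b3'.
by rewrite Ea2 Eb2 Ea3 Eb3 Ha Ha' Hb Hb' P2 P3.
Qed.

Lemma triple_of_Q1 : interval_minor Q1 P -> exists i j, candb i j.
Proof.
move=> [r [c [[r0 r3 Hr] [[c0 c3 Hc] Hw]]]].
have q01 : Q1 (@Ordinal 3 0 isT) (@Ordinal 3 1 isT) by rewrite /Q1 mxE.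
have q10 : Q1 (@Ordinal 3 1 isT) (@Ordinal 3 0 isT) by rewrite /Q1 mxE.
have q22 : Q1 (@Ordinal 3 2 isT) (@Ordinal 3 2 isT) by rewrite /Q1 mxE.
case: (Hw _ _ q01) => a1 [b1 [P1 /andP[Ha1 Ha1'] /andP[Hb1 Hb1']]].
case: (Hw _ _ q10) => a2 [b2 [P2 /andP[Ha2 Ha2'] /andP[Hb2 Hb2']]].
case: (Hw _ _ q22) => a3 [b3 [P3 /andP[Ha3 Ha3'] /andP[Hb3 Hb3']]].
simpl in *.
exists a1, b1; apply/candbP; exists a2, b2, a3, b3; split; rewrite ?entE //; lia.
Qed.

Lemma cand_lt i j : candb i j -> i < k /\ j < l.
Proof. by case/andP => /ent_lt. Qed.

Lemma max_cand : (exists i j, candb i j) ->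
  exists x1 y1, [/\ candb x1 y1 & forall i j, candb i j -> i <= x1].
Proof.
move=> Hex.
pose Pr := fun i => [exists j : 'I_l, candb i j].
have exP : exists i, Pr i.
  case: Hex => i [j Hc]; exists i; apply/existsP.
  case: (cand_lt Hc) => _ Hj; by exists (Ordinal Hj).
have ubP : forall i, Pr i -> i <= k.
  move=> i /existsP[j Hc]; case: (cand_lt Hc) => Hi _; exact: ltnW.
case: (ex_maxnP exP ubP) => x1 /existsP[y1 Hc] Hmax.
exists x1, y1; split => // i j Hij.
apply: Hmax; apply/existsP.
case: (cand_lt Hij) => _ Hj; by exists (Ordinal Hj).
Qed.

End Main.

Lemma mod_lt_same_div b b' d : b %/ d = b' %/ d -> b < b' -> b %% d < b' %% d.
Proof.
move=> E H; have e1 := divn_eq b d; have e2 := divn_eq b' d; rewrite E in e1.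
move: e1 e2 H; move: (b' %/ d * d) (b %% d) (b' %% d) => x y z; lia.
Qed.

Lemma eq_of_sum_le a b c d : a + b = c + d -> a <= c -> b <= d -> a = c /\ b = d.
Proof. lia. Qed.

Lemma div_same_between b1 b2 b3 d : b1 <= b2 <= b3 -> b1 %/ d = b3 %/ d -> b2 %/ d = b1 %/ d.
Proof.
move=> /andP[H1 H2] E.
have := leq_div2r d H1; have := leq_div2r d H2; rewrite E.
move: (b3 %/ d) (b2 %/ d) => x y; lia.
Qed.

Section Constr.
Variables (k l : nat) (P : 'M[bool]_(k, l)) (x1 y1 K : nat).
Hypothesis Hc1 : candb P x1 y1.
Hypothesis Hmax : forall i j, candb P i j -> i <= x1.

Definition mm := x1 + 1 + K * (k - x1).
Definition nn := K * l.+1.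

Definition Mf (a b : nat) : bool :=
  if a < x1 then true
  else if a == x1 then b %% l.+1 == l
  else [&& (b %/ l.+1) + ((a - x1.+1) %/ (k - x1)) == K.-1,
           ent P (x1 + (a - x1.+1) %% (k - x1)) (b %% l.+1)
         & ~~ (((a - x1.+1) %% (k - x1) == 0) && (b %% l.+1 == y1))].

Definition Mc : 'M[bool]_(mm, nn) := \matrix_(a < mm, b < nn) Mf a b.

Lemma x1_lt : x1 < k.
Proof. by case: (cand_lt Hc1). Qed.

Lemma y1_lt : y1 < l.
Proof. by case: (cand_lt Hc1). Qed.

Lemma Mf_low a b : x1 < a -> Mf a b =
  [&& (b %/ l.+1) + ((a - x1.+1) %/ (k - x1)) == K.-1,
      ent P (x1 + (a - x1.+1) %% (k - x1)) (b %% l.+1)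
    & ~~ (((a - x1.+1) %% (k - x1) == 0) && (b %% l.+1 == y1))].
Proof.
move=> H; rewrite /Mf.
have -> : (a < x1) = false by apply/negbTE; rewrite -leqNgt ltnW.
have -> : (a == x1) = false by apply/negbTE; rewrite neq_ltn H orbT.
by [].
Qed.

Lemma Mf_mid b : Mf x1 b = (b %% l.+1 == l).
Proof. by rewrite /Mf ltnn eqxx. Qed.

Lemma core213 a1 a2 a3 b1 b2 b3 :
  x1 <= a1 -> a1 < a2 -> a2 < a3 -> b2 < b1 -> b1 < b3 ->
  Mf a1 b1 -> Mf a2 b2 -> Mf a3 b3 ->
  [/\ x1 < a1, (a1 - x1.+1) %/ (k - x1) = (a2 - x1.+1) %/ (k - x1),
      (b1 %/ l.+1) + ((a1 - x1.+1) %/ (k - x1)) = K.-1,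
      candb P x1 (b1 %% l.+1) & b1 %% l.+1 != y1].
Proof.
move=> H1 H12 H23 Hb21 Hb13 M1 M2 M3.
have Ha2 : x1 < a2 by apply: leq_ltn_trans H12.
have Ha3 : x1 < a3 by apply: ltn_trans H23.
rewrite Mf_low // in M2; rewrite Mf_low // in M3.
case/and3P: M2 => /eqP E2 e2 _.
case/and3P: M3 => /eqP E3 e3 _.
have Hu : (a2 - x1.+1) %/ (k - x1) <= (a3 - x1.+1) %/ (k - x1)
  by apply: leq_div2r; apply: leq_sub2r; apply: ltnW.
have Ht : b2 %/ l.+1 <= b3 %/ l.+1 by apply: leq_div2r; apply: ltnW; apply: ltn_trans Hb13.
have [Et Eu] := eq_of_sum_le (etrans E2 (esym E3)) Ht Hu.
have Et1 : b1 %/ l.+1 = b2 %/ l.+1.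
  by apply: (div_same_between (b1:=b2) (b2:=b1) (b3:=b3)) Et; rewrite (ltnW Hb21) (ltnW Hb13).
have Hj21 : b2 %% l.+1 < b1 %% l.+1 by apply: mod_lt_same_div.
have Hj13 : b1 %% l.+1 < b3 %% l.+1 by apply: mod_lt_same_div => //; rewrite Et1.
have Hj3 : b3 %% l.+1 < l by case: (ent_lt e3).
have Hj1 : b1 %% l.+1 < l by apply: ltn_trans Hj3.
have Ha1 : x1 < a1.
  rewrite ltn_neqAle H1 andbT; apply/eqP => E; move: M1; rewrite -E Mf_mid.
  by rewrite (ltn_eqF Hj1).
rewrite Mf_low // in M1; case/and3P: M1 => /eqP E1 e1 Hne.
have Eu1 : (a1 - x1.+1) %/ (k - x1) = (a2 - x1.+1) %/ (k - x1).
  by apply: (@addnI (b2 %/ l.+1)); rewrite -{1}Et1 E1 E2.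
have Hs12 : (a1 - x1.+1) %% (k - x1) < (a2 - x1.+1) %% (k - x1).
  by apply: mod_lt_same_div => //; rewrite ltn_sub2rE // ltnW.
have Hs23 : (a2 - x1.+1) %% (k - x1) < (a3 - x1.+1) %% (k - x1).
  by apply: mod_lt_same_div => //; rewrite ltn_sub2rE // ltnW.
have Hcand : candb P (x1 + (a1 - x1.+1) %% (k - x1)) (b1 %% l.+1).
  apply/candbP.
  exists (x1 + (a2 - x1.+1) %% (k - x1)), (b2 %% l.+1),
         (x1 + (a3 - x1.+1) %% (k - x1)), (b3 %% l.+1).
  split => //; apply/andP; split => //; rewrite ltn_add2l //.
have Hs0 : (a1 - x1.+1) %% (k - x1) = 0.
  by move: (Hmax Hcand); rewrite -[X in _ <= X]addn0 leq_add2l leqn0 => /eqP.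
split => //.
- by move: Hcand; rewrite Hs0 addn0.
- by move: Hne; rewrite Hs0 eqxx.
Qed.

End Constr.

Section Avoid.
Variables (k l : nat) (P : 'M[bool]_(k, l)) (x1 y1 K : nat).
Hypothesis Hc1 : candb P x1 y1.
Hypothesis Hmax : forall i j, candb P i j -> i <= x1.

Local Notation Mc := (Mc P x1 y1 K).
Local Notation Mf := (Mf P x1 y1 K).

Lemma avoid : ~ interval_minor P Mc.
Proof.
move=> [r [c [[r0 rk Hr] [[c0 cl Hc] Hw]]]].
have x1k := x1_lt Hc1.
pose x1o : 'I_k := Ordinal x1k.
pose C : {set 'I_l} := [set j : 'I_l | candb P x1 j].
have key : forall j : 'I_l, exists p : nat * nat * nat, j \in C ->
  [/\ r x1 <= p.1.1 < r x1.+1, c j <= p.1.2 < c j.+1 & r x1.+1 <= p.2] /\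
  [/\ (p.1.1 - x1.+1) %/ (k - x1) = (p.2 - x1.+1) %/ (k - x1),
      (p.1.2 %/ l.+1) + ((p.1.1 - x1.+1) %/ (k - x1)) = K.-1,
      candb P x1 (p.1.2 %% l.+1) & p.1.2 %% l.+1 != y1].
  move=> j; case: (boolP (j \in C)) => jC; last by exists (0, 0, 0).
  move: (jC); rewrite inE => /candbP [a2 [b2 [a3 [b3 [e1 e2 e3 /andP[Ha12 Ha23] /andP[Hb21 Hb13]]]]]].
  case: (ent_ord e2) => a2' [b2' [Ea2 Eb2 P2]].
  case: (ent_ord e3) => a3' [b3' [Ea3 Eb3 P3]].
  subst a2 b2 a3 b3.
  have P1 : P x1o j by rewrite -entE.
  case: (Hw _ _ P1) => A1 [B1 [M1 /andP[HA1 HA1'] /andP[HB1 HB1']]].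
  case: (Hw _ _ P2) => A2 [B2 [M2 /andP[HA2 HA2'] /andP[HB2 HB2']]].
  case: (Hw _ _ P3) => A3 [B3 [M3 /andP[HA3 HA3'] /andP[HB3 HB3']]].
  rewrite /= mxE in M1; rewrite mxE in M2; rewrite mxE in M3.
  rewrite /= in HA1 HA1'.
  have mono := cut_mono Hr.
  have cmono := cut_mono Hc.
  have r12 : r x1.+1 <= r a2'.
    by apply: mono; apply/andP; split; [exact: Ha12 | exact: ltnW (ltn_ord _)].
  have r23 : r a2'.+1 <= r a3'.
    by apply: mono; apply/andP; split; [exact: Ha23 | exact: ltnW (ltn_ord _)].
  have c21 : c b2'.+1 <= c j.
    by apply: cmono; apply/andP; split; [exact: Hb21 | exact: ltnW (ltn_ord _)].
  have c13 : c j.+1 <= c b3'.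
    by apply: cmono; apply/andP; split; [exact: Hb13 | exact: ltnW (ltn_ord _)].
  have Hx1 : x1 <= r x1 by apply: (cut_ge r0 Hr); apply: ltnW.
  have [] := @core213 k l P x1 y1 K Hmax A1 A2 A3 B1 B2 B3.
  - exact: leq_trans Hx1 HA1.
  - exact: leq_trans HA1' (leq_trans r12 HA2).
  - exact: leq_trans HA2' (leq_trans r23 HA3).
  - exact: leq_trans HB2' (leq_trans c21 HB1).
  - exact: leq_trans HB1' (leq_trans c13 HB3).
  - exact: M1.
  - exact: M2.
  - exact: M3.
  move=> _ EU ET Hcd Hne.
  exists (val A1, val B1, val A2) => _ /=; split; split => //.
  - by rewrite HA1.
  - by rewrite HB1.
  - exact: leq_trans r12 HA2.
have [F HF] := fin_all_exists key.
have y1l := y1_lt Hc1.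
pose y1o : 'I_l := Ordinal y1l.
have y1C : y1o \in C by rewrite inE.
have Uconst : forall j j', j \in C -> j' \in C ->
    ((F j').1.1 - x1.+1) %/ (k - x1) <= ((F j).1.1 - x1.+1) %/ (k - x1).
  move=> j j' jC j'C.
  have [[/andP[_ Hj'] _ _] _] := HF j' j'C.
  have [[_ _ Hj2] [EU _ _ _]] := HF j jC.
  rewrite EU; apply: leq_div2r; apply: leq_sub2r.
  exact: ltnW (leq_trans Hj' Hj2).
have Tconst : forall j j', j \in C -> j' \in C ->
    (F j).1.2 %/ l.+1 = (F j').1.2 %/ l.+1.
  move=> j j' jC j'C.
  have [_ [_ E1 _ _]] := HF j jC.
  have [_ [_ E2 _ _]] := HF j' j'C.
  have EU : ((F j).1.1 - x1.+1) %/ (k - x1) = ((F j').1.1 - x1.+1) %/ (k - x1).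
    by apply/eqP; rewrite eqn_leq !Uconst.
  by apply: (@addIn (((F j).1.1 - x1.+1) %/ (k - x1))); rewrite E1 EU E2.
pose g (j : 'I_l) : nat := (F j).1.2 %% l.+1.
have glt : forall j j', j \in C -> j' \in C -> j < j' -> g j < g j'.
  move=> j j' jC j'C Hjj'.
  apply: mod_lt_same_div; first exact: Tconst.
  have [[_ /andP[_ H1] _] _] := HF j jC.
  have [[_ /andP[H2 _] _] _] := HF j' j'C.
  apply: leq_trans H1 (leq_trans _ H2).
  by apply: (cut_mono Hc); rewrite Hjj' /= ltnW.
pose gO (j : 'I_l) : 'I_l := insubd y1o (g j).
have gC : forall j, j \in C -> (g j < l) /\ candb P x1 (g j) /\ g j != y1.
  move=> j jC; have [_ [_ _ Hcd Hne]] := HF j jC.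
  by split; [case: (cand_lt Hcd) | split].
have gOv : forall j, j \in C -> val (gO j) = g j.
  by move=> j jC; rewrite val_insubd; case: (gC j jC) => ->.
have inj : {in C &, injective gO}.
  move=> j j' jC j'C E.
  have E' : g j = g j' by rewrite -gOv // -(gOv j') // E.
  apply: val_inj; case: (ltngtP j j') => H.
  - by have := glt _ _ jC j'C H; rewrite E' ltnn.
  - by have := glt _ _ j'C jC H; rewrite E' ltnn.
  - exact: H.
have sub : [set gO j | j in C] \subset C :\ y1o.
  apply/subsetP => z /imsetP[j0 jC Ez]; rewrite {}Ez.
  have [_ [Hcd Hne]] := gC j0 jC.
  rewrite !inE -val_eqE gOv // Hne /=.
  by rewrite gOv.
have := subset_leq_card sub.
rewrite card_in_imset // (cardsD1 y1o C) y1C.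
by rewrite add1n ltnn.
Qed.

End Avoid.

Section Create.
Variables (k l : nat) (P : 'M[bool]_(k, l)) (x1 y1 K : nat).
Hypothesis Hc1 : candb P x1 y1.

Local Notation Mc := (Mc P x1 y1 K).

Lemma x1_mm : x1 < mm k x1 K.
Proof. by rewrite /mm addn1 ltnS leq_addr. Qed.

Lemma center_nn t : t < K -> t * l.+1 + y1 < nn l K.
Proof.
move=> Ht; have y1l := y1_lt Hc1.
have : t.+1 * l.+1 <= K * l.+1 by rewrite leq_mul2r Ht orbT.
rewrite /nn mulSn; lia.
Qed.

Lemma create t (Ht : t < K) :
  interval_minor P (Defs.set1 Mc (Ordinal x1_mm) (Ordinal (center_nn Ht))).
Proof.
have x1k := x1_lt Hc1; have y1l := y1_lt Hc1.
have hpos : 0 < k - x1 by rewrite subn_gt0.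
have Kpos : 0 < K by apply: leq_ltn_trans Ht.
pose u := K.-1 - t.
pose a0 := x1.+1 + u * (k - x1).
have uh : u * (k - x1) + (k - x1) <= K * (k - x1).
  rewrite addnC -mulSn leq_mul2r; apply/orP; right; rewrite /u; lia.
have tw : t * l.+1 + l.+1 <= K * l.+1 by rewrite addnC -mulSn leq_mul2r Ht orbT.
have tu : t + u = K.-1 by rewrite /u; lia.
have Emm : mm k x1 K = x1 + 1 + K * (k - x1) by [].
have Enn : nn l K = K * l.+1 by [].
pose r := fun i : nat => if i <= x1 then i else if i < k then a0 + (i - x1) else mm k x1 K.
pose c := fun j : nat => if j == 0 then 0 else if j < l then t * l.+1 + j else nn l K.
exists r, c; split; [|split].
- split.
  + by rewrite /r leq0n.
  + by rewrite /r leqNgt x1k ltnn.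
  + move=> i Hi; rewrite /r /=.
    case: (ltngtP i x1) => Hix.
    * by [].
    * rewrite Hi; case: ifP => _; rewrite /a0; lia.
    * subst i.
      case: ifP => _; rewrite /a0; lia.
- split.
  + by [].
  + by rewrite /c; case: l y1l => // l' _; rewrite ltnn.
  + move=> j Hj; rewrite /c /=.
    case: (j =P 0) => [->|_]; first by case: ifP => _; lia.
    by rewrite Hj; case: ifP => _; lia.
move=> i j Pij.
have jl := ltn_ord j; have il := ltn_ord i.
have jw : t * l.+1 + j < nn l K by rewrite Enn; lia.
have cband : c j <= t * l.+1 + j < c j.+1.
  rewrite /c /=; case: ifP => [/eqP Ej0|_]; [rewrite Ej0 /=|rewrite jl];
    case: ifP => _; lia.
case: (ltnP i x1) => Hix.
  have ia : i < mm k x1 K by rewrite Emm; lia.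
  exists (Ordinal ia), (Ordinal jw); split => //.
  - by rewrite /Defs.set1 !mxE /Mf /= Hix.
  - by rewrite /r /= (ltnW Hix) Hix /=; apply/andP; split; [exact: leqnn | exact: ltnSn].
case: (boolP ((i == x1 :> nat) && (j == y1 :> nat))) => Hxy.
  case/andP: Hxy => /eqP Ei /eqP Ej.
  exists (Ordinal x1_mm), (Ordinal (center_nn Ht)); split.
  - by rewrite /Defs.set1 !mxE /= !eqxx orbT.
  - rewrite /r /= Ei leqnn ltnn /=; case: ifP => _; rewrite /a0; lia.
  - by rewrite /= -Ej.
have ha : a0 + (i - x1) < mm k x1 K by rewrite Emm /a0; lia.
exists (Ordinal ha), (Ordinal jw); split => //.
- rewrite /Defs.set1 !mxE /= Mf_low; last by rewrite /a0; lia.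
  have -> : a0 + (i - x1) - x1.+1 = u * (k - x1) + (i - x1) by rewrite /a0; lia.
  have il' : i - x1 < k - x1 by lia.
  have jl1 : j < l.+1 by apply: ltn_trans jl _.
  rewrite divnMDl // divnMDl // (divn_small il') (divn_small jl1) !addn0.
  rewrite modnMDl modnMDl (modn_small il') (modn_small jl1).
  rewrite tu eqxx /= subnKC // entE Pij /=.
  apply/orP; left; apply/negP => /andP[/eqP H0 /eqP H1].
  by move: Hxy; rewrite H1 eqxx andbT; apply/negP/negPn; apply/eqP; lia.
- rewrite /r /=; case: (ltngtP i x1) => Hix'.
  + by move: Hix; rewrite leqNgt Hix'.
  + rewrite il; case: ifP => _; rewrite /a0; lia.
  + case: ifP => _; rewrite /a0; lia.
Qed.

End Create.

Lemma im_mono k l (P : 'M[bool]_(k, l)) m n (M M' : 'M[bool]_(m, n)) :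
  interval_minor P M -> (forall a b, M a b -> M' a b) -> interval_minor P M'.
Proof.
move=> [r [c [Hr [Hc Hw]]]] HM; exists r, c; split => //; split => //.
move=> i j Pij; have [a [b [Mab H1 H2]]] := Hw i j Pij.
by exists a, b; split => //; apply: HM.
Qed.

Lemma set1_ge m n (M : 'M[bool]_(m, n)) a b x y : M x y -> Defs.set1 M a b x y.
Proof. by rewrite /Defs.set1 mxE => ->. Qed.

Lemma saturate k l (P : 'M[bool]_(k, l)) m n (M : 'M[bool]_(m, n)) :
  ~ interval_minor P M ->
  exists M' : 'M[bool]_(m, n), (forall a b, M a b -> M' a b) /\ critical (Av P) M'.
Proof.
pose Z (N : 'M[bool]_(m, n)) := [set p : 'I_m * 'I_n | ~~ N p.1 p.2].
move=> HM; move: {2}(#|Z M|) (leqnn #|Z M|) => N.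
elim: N M HM => [|N IH] M HM Hz.
  exists M; split => //; split => // a b Mab.
  have : (a, b) \in Z M by rewrite inE Mab.
  by move: Hz; rewrite leqn0 => /eqP/cards0_eq ->; rewrite inE.
case: (classic (critical (Av P) M)) => Hcr; first by exists M.
have [a [b [Mab Hab]]] : exists a b, M a b = false /\ ~ interval_minor P (Defs.set1 M a b).
  apply: NNPP => Hn; apply: Hcr; split => // a b Mab Hav.
  by apply: Hn; exists a, b; split.
have Hlt : #|Z (Defs.set1 M a b)| < #|Z M|.
  apply: proper_card; apply/properP; split.
    apply/subsetP => p; rewrite !inE; apply: contra => Hp.
    by apply: set1_ge.
  exists (a, b); first by rewrite inE Mab.
  by rewrite inE /Defs.set1 mxE !eqxx orbT.
have [M' [HM' Hc]] := IH _ Hab (leq_trans (leq_trans Hlt Hz) (leqnn _)).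
by exists M'; split => // x y Mxy; apply: HM'; apply: set1_ge.
Qed.

Lemma exists_run_start (f : nat -> bool) L R : L <= R -> ~~ f R -> (L = 0 \/ f L.-1) ->
  exists j, [/\ L <= j <= R, ~~ f j & (j = 0 \/ f j.-1)].
Proof.
elim: R => [|R IH] HLR HfR HL.
  by exists 0; split; [rewrite HLR | exact: HfR | left].
case: (ltngtP L R.+1) HLR => // [HLt|HLe] _.
  case HfR': (f R).
    by exists R.+1; split => //; [rewrite ltnW //= | right].
  have [j [Hj1 Hj2 Hj3]] := IH HLt (negbT HfR') HL.
  by exists j; split => //; case/andP: Hj1 => -> /= /leqW.
by exists R.+1; split => //; [rewrite HLe leqnn | rewrite -HLe].
Qed.

Section Complexity.
Variables (k l : nat) (P : 'M[bool]_(k, l)) (x1 y1 K : nat).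
Hypothesis Hc1 : candb P x1 y1.

Local Notation Mc := (Mc P x1 y1 K).

Lemma complexity (M' : 'M[bool]_(mm k x1 K, nn l K)) :
  (forall a b, Mc a b -> M' a b) -> critical (Av P) M' ->
  K <= row_complexity M' (Ordinal (x1_mm k x1 K)).
Proof.
move=> HMM' [Hav _].
have y1l := y1_lt Hc1.
pose x1o : 'I_(mm k x1 K) := Ordinal (x1_mm k x1 K).
pose f := fun b => ent M' x1 b.
have cfalse : forall t (Ht : t < K), f (t * l.+1 + y1) = false.
  move=> t Ht; rewrite /f -[x1]/(val x1o) -[t * l.+1 + y1]/(val (Ordinal (center_nn Hc1 Ht))) entE.
  apply/negbTE/negP => H; apply: Hav.
  apply: im_mono (create Hc1 Ht) _ => a b.
  rewrite /Defs.set1 mxE => /orP[/HMM' //|/andP[/eqP -> /eqP ->]] //.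
have septrue : forall t, t < K -> f (t * l.+1 + l).
  move=> t Ht.
  have Hlt : t * l.+1 + l < nn l K.
    have : t.+1 * l.+1 <= K * l.+1 by rewrite leq_mul2r Ht orbT.
    rewrite /nn mulSn; lia.
  rewrite /f -[x1]/(val x1o) -[t * l.+1 + l]/(val (Ordinal Hlt)) entE.
  apply: HMM'; rewrite mxE /= Mf_mid modnMDl modn_small //.
have key : forall t : 'I_K, exists s : 'I_(nn l K),
    run_start M' x1o s && (t * l.+1 <= s <= t * l.+1 + y1).
  move=> t.
  have [j [/andP[Hj1 Hj2] Hfj Hj0]] :
    exists j, [/\ t * l.+1 <= j <= t * l.+1 + y1, ~~ f j & (j = 0 \/ f j.-1)].
    apply: exists_run_start; first by rewrite leq_addr.
      by rewrite cfalse.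
    case: (posnP t) => [->|tpos]; first by left.
    right; have := septrue t.-1 (leq_ltn_trans (leq_pred t) (ltn_ord t)).
    have E : (t * l.+1).-1 = t.-1 * l.+1 + l.
      by rewrite -{1}(prednK tpos) mulSn; move: (t.-1 * l.+1) => z; lia.
    by rewrite E.
  have jn : j < nn l K by apply: leq_ltn_trans Hj2 (center_nn Hc1 (ltn_ord t)).
  exists (Ordinal jn); rewrite Hj1 Hj2 andbT /run_start /=.
  move: Hfj; rewrite /f -[x1]/(val x1o) -[j]/(val (Ordinal jn)) entE => -> /=.
  rewrite andbT.
  case: (posnP j) => [Ej|jpos]; first by rewrite Ej.
  case: Hj0 => [Ej|Hfj1]; first by move: jpos; rewrite Ej.
  apply/orP; right.
  have jn' : j.-1 < nn l K by apply: leq_ltn_trans (leq_pred j) jn.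
  apply/existsP; exists (Ordinal jn') => /=.
  rewrite prednK // eqxx /=.
  by move: Hfj1; rewrite /f -[x1]/(val x1o) -[j.-1]/(val (Ordinal jn')) entE.
have [s Hs] := fin_all_exists key.
have sinj : injective s.
  move=> t t' E.
  have /andP[_ /andP[H1 H2]] := Hs t.
  have /andP[_ /andP[H1' H2']] := Hs t'.
  rewrite E in H1 H2.
  apply: val_inj; case: (ltngtP t t') => // Htt.
  - have : t.+1 * l.+1 <= t' * l.+1 by rewrite leq_mul2r Htt orbT.
    rewrite mulSn; lia.
  - have : t'.+1 * l.+1 <= t * l.+1 by rewrite leq_mul2r Htt orbT.
    rewrite mulSn; lia.
have sub : [set s t | t : 'I_K] \subset [pred j : 'I_(nn l K) | run_start M' x1o j].
  apply/subsetP => z /imsetP[t _ ->]; rewrite inE.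
  by case/andP: (Hs t).
have := subset_leq_card sub.
by rewrite card_imset // card_ord.
Qed.

End Complexity.

Theorem theorem3p4 (k l : nat) (P : 'M[bool]_(k, l)) :
  interval_minor Q1 P -> row_unbounded (Av P).
Proof.
move=> HQ K.
have [x1 [y1 [Hc1 Hmax]]] := max_cand (triple_of_Q1 HQ).
have Hav := avoid Hc1 Hmax (K := K).
have [M' [HMM' Hcrit]] := saturate Hav.
exists (mm k x1 K), (nn l K), M', (Ordinal (x1_mm k x1 K)).
by split => //; apply: (complexity Hc1 HMM' Hcrit).
Qed.
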